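(* Let $\Gamma$ be a finitely generated group and for $i=1,2$ let $\mathbb{F}_i$ be a free group on a finite basis $X_i$ and $\pi_i:\mathbb{F}_i\twoheadrightarrow\Gamma$ an epimorphism. If $\Gamma$ is stable with respect to $\pi_1$, then it is stable with respect to $\pi_2$. Moreover there exists $C_0\ge 1$ such that for all $x\ge1$: (i) if $\pi_1$ is an isomorphism then $F_\Gamma^{\pi_2}(x)\le C_0x$; (ii) if $\pi_1$ is not an isomorphism then $F_\Gamma^{\pi_2}(x)\le C_0F_\Gamma^{\pi_1}(C_0x)$.
   Context: For a finite set $\Omega$, $d_\Omega(\sigma,\tau)=|\{\omega:\sigma(\omega)\ne\tau(\omega)\}|/|\Omega|$. For an epimorphism $\pi:\mathbb{F}\twoheadrightarrow\Gamma$ from a free group on finite basis $X$ and $\epsilon>0$, a pair $(\delta,E)$ with $\delta\in(0,1]$, $E\subseteq\ker\pi$ finite, is valid for $\epsilon$ if for every finite $\Omega$ and every homomorphism $\rho:\mathbb{F}\to\mathrm{Sym}(\Omega)$ with $d_\Omega(\rho(r),\mathrm{id})<\delta$ for all $r\in E$, there is a homomorphism $\phi:\Gamma\to\mathrm{Sym}(\Omega)$ with $d_\Omega(\rho(x),\phi(\pi(x)))<\epsilon$ for all $x\in X$. $\Gamma$ is stable w.r.t. $\pi$ if valid pairs exist for all $\epsilon>0$. $F_\Gamma^\pi(x)=\inf\{\|E\|/\delta:(\delta,E)\text{ valid for }1/x\}$, where $\|E\|=\sum_{r\in E}|r|$ with word length in $X$. *)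

(* Defs.v *)
From HB Require Import structures.
From mathcomp Require Import all_boot all_order all_algebra all_fingroup.
From mathcomp Require Import all_classical all_reals.
Set Implicit Arguments. Unset Strict Implicit. Unset Printing Implicit Defensive.
Import Order.TTheory GRing.Theory Num.Theory.
Local Open Scope ring_scope.
Local Open Scope classical_set_scope.

(* a letter (x, false) is x, (x, true) is x^{-1} *)
Definition cancels (X : finType) (a b : X * bool) : bool :=
  (a.1 == b.1) && (a.2 != b.2).

Fixpoint reducedb (X : finType) (w : seq (X * bool)) : bool :=
  match w with
  | a :: ((b :: _) as w') => ~~ cancels a b && reducedb w'
  | _ => true
  end.

Definition cons_red (X : finType) (a : X * bool) (w : seq (X * bool)) :=
  match w with
  | b :: w' => if cancels a b then w' else a :: w
  | [::] => [:: a]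
  end.

Definition fred (X : finType) (s : seq (X * bool)) := foldr (@cons_red X) [::] s.

Lemma reducedb_tail (X : finType) (b : X * bool) w :
  reducedb (b :: w) -> reducedb w.
Proof. by case: w => [|c w] //= /andP[]. Qed.

Lemma cons_red_reduced (X : finType) (a : X * bool) w :
  reducedb w -> reducedb (cons_red a w).
Proof.
case: w => [|b w] //= Hw; case: ifP => Hab; first exact: reducedb_tail Hw.
by rewrite /= Hab.
Qed.

Lemma fred_reduced (X : finType) (s : seq (X * bool)) : reducedb (fred s).
Proof. by elim: s => [|a s IH] //=; apply: cons_red_reduced. Qed.

Definition FG (X : finType) := {w : seq (X * bool) | reducedb w}.

Definition fmul (X : finType) (u v : FG X) : FG X :=
  exist _ (fred (sval u ++ sval v)) (fred_reduced _).

Definition gen (X : finType) (x : X) : FG X := exist _ [:: (x, false)] isT.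

Definition wlen (X : finType) (u : FG X) : nat := size (sval u).

Record grp := Grp {
  gcar :> Type;
  gmul : gcar -> gcar -> gcar;
  gone : gcar;
  ginv : gcar -> gcar;
  gmulA : associative gmul;
  gmul1 : left_id gone gmul;
  gmulV : left_inverse gone ginv gmul }.

Definition FG_hom (X : finType) (G : grp) (pi : FG X -> G) : Prop :=
  forall u v, pi (fmul u v) = @gmul G (pi u) (pi v).

Definition FG_epi (X : finType) (G : grp) (pi : FG X -> G) : Prop :=
  FG_hom pi /\ (forall g : G, exists w, pi w = g).

Definition FG_perm_hom (X : finType) (Om : finType) (rho : FG X -> {perm Om}) : Prop :=
  forall u v, rho (fmul u v) = (rho u * rho v)%g.

Definition grp_perm_hom (G : grp) (Om : finType) (phi : G -> {perm Om}) : Prop :=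
  forall a b, phi (@gmul G a b) = (phi a * phi b)%g.

Definition dOm (R : realType) (Om : finType) (s t : {perm Om}) : R :=
  (#|[pred w | s w != t w]|)%:R / (#|Om|)%:R.

Definition normE (X : finType) (E : seq (FG X)) : nat := \sum_(r <- E) wlen r.

(* (delta, E) is valid for eps; the finite set E is given as a duplicate-free list *)
Definition valid (R : realType) (X : finType) (G : grp) (pi : FG X -> G)
    (eps delta : R) (E : seq (FG X)) : Prop :=
  [/\ 0 < delta <= 1, uniq E, (forall r, r \in E -> pi r = @gone G) &
    forall (Om : finType) (rho : FG X -> {perm Om}), FG_perm_hom rho ->
      (forall r, r \in E -> dOm R (rho r) 1%g < delta) ->
      exists phi : G -> {perm Om}, grp_perm_hom phi /\
        forall x : X, dOm R (rho (gen x)) (phi (pi (gen x))) < eps].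

Definition stable (R : realType) (X : finType) (G : grp) (pi : FG X -> G) : Prop :=
  forall eps : R, 0 < eps -> exists delta E, valid pi eps delta E.

Definition Fstab (R : realType) (X : finType) (G : grp) (pi : FG X -> G) (x : R) : R :=
  inf [set t : R | exists delta E, valid pi x^-1 delta E /\ t = (normE E)%:R / delta].

(* Main.v *)
Require Import Defs.
From HB Require Import structures.
From mathcomp Require Import all_boot all_order all_algebra all_fingroup.
From mathcomp Require Import all_classical all_reals.
From mathcomp Require Import ring lra zify.
Import Order.TTheory GRing.Theory Num.Theory.

Module P1.
Set Implicit Arguments. Unset Strict Implicit. Unset Printing Implicit Defensive.
Import Order.TTheory GRing.Theory Num.Theory.

Section GrpLemmas.
Variable H : grp.
Local Notation "a ** b" := (@gmul H a b) (at level 40, left associativity).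
Local Notation one := (@gone H).
Local Notation inv := (@ginv H).

Lemma gmulA' (a b c : H) : a ** (b ** c) = a ** b ** c.
Proof. exact: gmulA. Qed.
Lemma gmulV' (a : H) : inv a ** a = one.
Proof. exact: gmulV. Qed.
Lemma gmul1' (a : H) : one ** a = a.
Proof. exact: gmul1. Qed.

Lemma gcancl (a b c : H) : a ** b = a ** c -> b = c.
Proof.
move=> E; by rewrite -(gmul1' b) -(gmulV' a) -gmulA' E gmulA' gmulV' gmul1'.
Qed.

Lemma gidem (y : H) : y ** y = y -> y = one.
Proof.
move=> E; have := gmulV' y; by rewrite -{2}E gmulA' gmulV' gmul1'.
Qed.

Lemma gmulVr (a : H) : a ** inv a = one.
Proof. apply: gidem; by rewrite -gmulA' (gmulA' (inv a)) gmulV' gmul1'. Qed.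

Lemma gmul1r (a : H) : a ** one = a.
Proof. by rewrite -(gmulV' a) gmulA' gmulVr gmul1'. Qed.

Lemma ginv_uniq (a b : H) : a ** b = one -> a = inv b.
Proof. move=> E; by rewrite -(gmul1r a) -(gmulVr b) gmulA' E gmul1'. Qed.

Lemma ginvK (a : H) : inv (inv a) = a.
Proof. by symmetry; apply: ginv_uniq; rewrite gmulVr. Qed.

Lemma ginvM (a b : H) : inv (a ** b) = inv b ** inv a.
Proof.
symmetry; apply: ginv_uniq.
by rewrite -gmulA' (gmulA' (inv a)) gmulV' gmul1' gmulV'.
Qed.

Lemma ginv1 : inv one = one.
Proof. by symmetry; apply: ginv_uniq; rewrite gmul1'. Qed.
End GrpLemmas.

Definition letter (X : finType) (H : grp) (g : X -> H) (a : X * bool) : H :=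
  if a.2 then ginv (g a.1) else g a.1.
Definition evalw (X : finType) (H : grp) (g : X -> H) (w : seq (X * bool)) : H :=
  foldr (fun a acc => gmul (letter g a) acc) (gone H) w.

Section Eval.
Variables (X : finType) (H : grp) (g : X -> H).

Lemma evalw_cat u v : evalw g (u ++ v) = gmul (evalw g u) (evalw g v).
Proof.
elim: u => [|a u IH] /=; first by rewrite gmul1'.
by rewrite IH gmulA'.
Qed.

Lemma letter_cancel a b : cancels a b -> gmul (letter g a) (letter g b) = gone H.
Proof.
case: a b => [x p] [y q]; rewrite /cancels /letter /= => /andP[/eqP -> ].
by case: p; case: q => //= _; rewrite ?gmulV' ?gmulVr.
Qed.

Lemma evalw_cons_red a w :
  evalw g (cons_red a w) = gmul (letter g a) (evalw g w).
Proof.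
case: w => [|b w] //=; case: ifP => //= Hab.
by rewrite gmulA' letter_cancel // gmul1'.
Qed.

Lemma evalw_fred s : evalw g (fred s) = evalw g s.
Proof. by elim: s => [|a s IH] //=; rewrite evalw_cons_red IH. Qed.
End Eval.

Lemma fred_id (X : finType) (w : seq (X * bool)) : reducedb w -> fred w = w.
Proof.
elim: w => [|a w IH] //= Hr.
rewrite IH; last exact: reducedb_tail Hr.
case: w Hr {IH} => [|b w] //= /andP[Hab _]; by rewrite (negbTE Hab).
Qed.

Lemma FG_eq (X : finType) (u v : FG X) : sval u = sval v -> u = v.
Proof.
case: u => u pu; case: v => v pv /= E; subst v; congr exist; exact: eq_irrelevance.
Qed.

Definition FGe (X : finType) : FG X := exist _ [::] isT.

Lemma hom_one (X : finType) (H : grp) (h : FG X -> H) : FG_hom h -> h (FGe X) = gone H.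
Proof.
move=> Hh; apply: gidem; rewrite -Hh; congr h; exact: FG_eq.
Qed.

Lemma hom_eval (X : finType) (H : grp) (h : FG X -> H) : FG_hom h ->
  forall u, h u = evalw (fun x => h (gen x)) (sval u).
Proof.
move=> Hh [w pw] /=; elim: w pw => [|a w IH] pw /=.
  by rewrite -(hom_one Hh); congr h; exact: FG_eq.
have pw' := reducedb_tail pw.
have pa : reducedb [:: a] by [].
have -> : exist (fun w => reducedb w) (a :: w) pw =
   fmul (exist _ [:: a] pa) (exist _ w pw').
  apply: FG_eq => /=; rewrite /fred /= -/(fred w) fred_id //.
  by case: w pw {IH pw'} => [|b w] //= /andP[Hab _]; rewrite (negbTE Hab).
rewrite Hh -IH; congr gmul.
case: a pa {pw} => x [] pa; rewrite /letter /=; last by congr h; exact: FG_eq.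
apply: ginv_uniq; rewrite -Hh -(hom_one Hh); congr h; apply: FG_eq => /=.
by rewrite /cons_red /cancels /= eqxx.
Qed.

End P1.
Import P1.

Module P2.
Set Implicit Arguments. Unset Strict Implicit. Unset Printing Implicit Defensive.
Import Order.TTheory GRing.Theory Num.Theory.

Definition permgrp (Om : finType) : grp :=
  @Grp {perm Om} (fun s t => (s * t)%g) 1%g (fun s => s^-1)%g
    (@mulgA _) (@mul1g _) (@mulVg _).

Lemma perm_hom_FG (X Om : finType) (rho : FG X -> {perm Om}) :
  FG_perm_hom rho -> @FG_hom X (permgrp Om) rho.
Proof. by []. Qed.

Definition cnt (Om : finType) (s t : {perm Om}) := #|[pred w | s w != t w]|.

Lemma cnt_sym (Om : finType) (s t : {perm Om}) : cnt s t = cnt t s.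
Proof. by apply: eq_card => w; rewrite !inE eq_sym. Qed.

Lemma cnt_tri (Om : finType) (s t u : {perm Om}) : cnt s u <= cnt s t + cnt t u.
Proof.
rewrite /cnt -cardUI; apply: leq_trans (leq_addr _ _).
apply: subset_leq_card; apply/fintype.subsetP => w; rewrite !inE /=.
by case: (eqVneq (s w) (t w)) => [->|].
Qed.

Lemma card_pred_perm (Om : finType) (s : {perm Om}) (P : pred Om) :
  #|[pred w | P (s w)]| = #|[pred w | P w]|.
Proof.
rewrite -(card_imset [pred w | P (s w)] (@perm_inj _ s)).
apply: eq_card => w; rewrite inE /=; apply/imsetP/idP.
  by case=> v; rewrite inE => Pv ->.
move=> Pw; exists (s^-1 w)%g; rewrite ?inE /=; by rewrite permKV.
Qed.

Lemma cnt_mul (Om : finType) (s1 s2 t1 t2 : {perm Om}) :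
  cnt (s1 * s2)%g (t1 * t2)%g <= cnt s1 t1 + cnt s2 t2.
Proof.
apply: leq_trans (cnt_tri _ (s1 * t2)%g _) _; rewrite [cnt s1 t1 + _]addnC leq_add //.
  apply: eq_leq; rewrite /cnt -[RHS](card_pred_perm s1 (fun v => s2 v != t2 v)).
  by apply: eq_card => w; rewrite !inE /= !permM.
by apply: eq_leq; apply: eq_card => w; rewrite !inE /= !permM (inj_eq (@perm_inj _ t2)).
Qed.

Lemma cnt_inv (Om : finType) (s t : {perm Om}) : cnt s^-1 t^-1 = cnt s t.
Proof.
rewrite /cnt -[RHS](card_pred_perm s^-1 (fun v => s v != t v)).
apply: eq_card => w; rewrite !inE /= permKV.
by rewrite -(inj_eq (@perm_inj _ t)) permKV eq_sym.
Qed.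

Lemma cnt_Vmul (Om : finType) (a b : {perm Om}) : cnt (a^-1 * b)%g 1%g = cnt a b.
Proof.
rewrite [RHS]cnt_sym /cnt -[RHS](card_pred_perm a^-1 (fun v => b v != a v)).
by apply: eq_card => w; rewrite !inE /= permM perm1 permKV.
Qed.

End P2.
Import P2.

Module P3.
Set Implicit Arguments. Unset Strict Implicit. Unset Printing Implicit Defensive.
Import Order.TTheory GRing.Theory Num.Theory.

Lemma eq_evalw (X : finType) (H : grp) (g g' : X -> H) w :
  g =1 g' -> evalw g w = evalw g' w.
Proof. move=> E; elim: w => [|a w IH] //=; by rewrite IH /letter E. Qed.

Lemma cnt_refl (Om : finType) (s : {perm Om}) : cnt s s = 0.
Proof. by apply: eq_card0 => z; rewrite !inE eqxx. Qed.

Lemma cnt_le_sum (X Om : finType) (g1 g2 : X -> {perm Om}) x :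
  cnt (g1 x) (g2 x) <= \sum_x cnt (g1 x) (g2 x).
Proof. by rewrite (bigD1 x) //= leq_addr. Qed.

Lemma cnt_eval (X Om : finType) (g1 g2 : X -> {perm Om}) w :
  cnt (@evalw X (permgrp Om) g1 w) (@evalw X (permgrp Om) g2 w) <=
  size w * \sum_x cnt (g1 x) (g2 x).
Proof.
elim: w => [|a w IH] /=; first by rewrite cnt_refl.
apply: leq_trans (cnt_mul _ _ _ _) _; rewrite mulSn leq_add //.
rewrite /letter; case: a.2; rewrite ?cnt_inv; exact: cnt_le_sum.
Qed.

End P3.
Import P3.

Module P4.
Set Implicit Arguments. Unset Strict Implicit. Unset Printing Implicit Defensive.
Import Order.TTheory GRing.Theory Num.Theory.

Definition flipl (X : finType) (a : X * bool) := (a.1, ~~ a.2).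
Definition invw (X : finType) (w : seq (X * bool)) := rev (map (@flipl X) w).

Lemma evalw_invw (X : finType) (H : grp) (g : X -> H) w :
  evalw g (invw w) = ginv (evalw g w).
Proof.
elim: w => [|a w IH]; first by rewrite /= ginv1.
rewrite /invw /= rev_cons -cats1 evalw_cat -/(invw w) IH /= ginvM gmul1r.
congr gmul; rewrite /letter /=; case: a.2 => //=; by rewrite ginvK.
Qed.

Lemma size_fred (X : finType) (s : seq (X * bool)) : size (fred s) <= size s.
Proof.
elim: s => [|a s IH] //=; apply: leq_trans _ (IH : size (fred s) < (size s).+1).
case: (fred s) => [|b w] //=; case: ifP => //= _; exact: leq_trans (leqnSn _) (leqnSn _).
Qed.

Section Transfer.
Variables (R : realType) (G : grp) (X1 X2 : finType).
Variables (pi1 : FG X1 -> G) (pi2 : FG X2 -> G).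
Hypotheses (Hpi1 : FG_hom pi1) (Hpi2 : FG_hom pi2).
Variables (vx : X1 -> FG X2) (uy : X2 -> FG X1).
Hypotheses (Hvx : forall x, pi2 (vx x) = pi1 (gen x))
           (Huy : forall y, pi1 (uy y) = pi2 (gen y)).

Definition wordof (a : X1 * bool) : seq (X2 * bool) :=
  if a.2 then invw (sval (vx a.1)) else sval (vx a.1).

Definition psi (r : FG X1) : FG X2 :=
  exist _ (fred (flatten (map wordof (sval r)))) (fred_reduced _).

Lemma evalw_flatten (H : grp) (g : X2 -> H) s :
  evalw g (flatten (map wordof s)) = evalw (fun x => evalw g (sval (vx x))) s.
Proof.
elim: s => [|a s IH] //=; rewrite evalw_cat IH; congr gmul.
by rewrite /wordof /letter; case: a.2; rewrite ?evalw_invw.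
Qed.

Lemma hom_psi (H : grp) (h : FG X2 -> H) : FG_hom h ->
  forall r, h (psi r) = evalw (fun x => h (vx x)) (sval r).
Proof.
move=> Hh r; rewrite (hom_eval Hh) /= evalw_fred evalw_flatten.
by apply: eq_evalw => x; rewrite -(hom_eval Hh).
Qed.

Lemma pi2_psi r : pi2 (psi r) = pi1 r.
Proof.
rewrite (hom_psi Hpi2) (hom_eval Hpi1); apply: eq_evalw => x; exact: Hvx.
Qed.

Definition trel (y : X2) : FG X2 :=
  exist _ (fred ((y, true) :: sval (psi (uy y)))) (fred_reduced _).

Lemma hom_trel (H : grp) (h : FG X2 -> H) : FG_hom h ->
  forall y, h (trel y) = gmul (ginv (h (gen y))) (h (psi (uy y))).
Proof.
move=> Hh y; rewrite (hom_eval Hh).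
have -> : sval (trel y) = fred ((y,true) :: sval (psi (uy y))) by [].
by rewrite evalw_fred (hom_eval Hh (psi (uy y))) /=.
Qed.

Lemma pi2_trel y : pi2 (trel y) = gone G.
Proof. by rewrite (hom_trel Hpi2) pi2_psi Huy gmulV'. Qed.

Definition Mv := \max_x wlen (vx x).
Definition Lu := \max_y wlen (uy y).
Definition Kc := \sum_(y : X2) (1 + Mv * Lu).

Lemma wlen_psi r : wlen (psi r) <= Mv * wlen r.
Proof.
rewrite /wlen /psi /=; apply: leq_trans (size_fred _) _.
case: r => w _ /=; elim: w => [|a w IH] //=.
rewrite size_cat mulnS leq_add //.
rewrite /wordof; case: a.2; rewrite ?size_rev ?size_map /Mv;
  exact: (leq_bigmax (F := fun x => wlen (vx x)) a.1).
Qed.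

Lemma wlen_trel y : wlen (trel y) <= 1 + Mv * Lu.
Proof.
rewrite /wlen.
have -> : sval (trel y) = fred ((y,true) :: sval (psi (uy y))) by [].
apply: leq_trans (size_fred _) _; rewrite /= add1n ltnS.
apply: leq_trans (wlen_psi _) _; rewrite leq_mul2l; apply/orP; right.
rewrite /Lu; exact: (leq_bigmax (F := fun y => wlen (uy y)) y).
Qed.

Definition E2 (E : seq (FG X1)) := undup (map psi E ++ map trel (enum X2)).

Lemma normE_undup (X : finType) (s : seq (FG X)) : normE (undup s) <= normE s.
Proof.
rewrite /normE; elim: s => [|a s IH] //=; rewrite big_cons.
case: ifP => _; first exact: leq_trans IH (leq_addl _ _).
by rewrite big_cons leq_add2l.
Qed.

Lemma normE_E2 E : normE (E2 E) <= Mv * normE E + Kc.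
Proof.
apply: leq_trans (normE_undup _) _; rewrite /normE big_cat /= leq_add //.
  rewrite big_map big_distrr /=; apply: leq_sum => r _; exact: wlen_psi.
rewrite big_map /Kc big_enum /=.
apply: leq_sum => y _; exact: wlen_trel.
Qed.

End Transfer.

End P4.
Import P4.

Module P5.
Set Implicit Arguments. Unset Strict Implicit. Unset Printing Implicit Defensive.
Import Order.TTheory GRing.Theory Num.Theory.
Local Open Scope ring_scope.

Lemma dOm_cnt (R : realType) (Om : finType) (s t : {perm Om}) :
  dOm R s t = (cnt s t)%:R / (#|Om|)%:R.
Proof. by []. Qed.

Section Transfer2.
Variables (R : realType) (G : grp) (X1 X2 : finType).
Variables (pi1 : FG X1 -> G) (pi2 : FG X2 -> G).
Hypotheses (Hpi1 : FG_hom pi1) (Hpi2 : FG_hom pi2).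
Variables (vx : X1 -> FG X2) (uy : X2 -> FG X1).
Hypotheses (Hvx : forall x, pi2 (vx x) = pi1 (gen x))
           (Huy : forall y, pi1 (uy y) = pi2 (gen y)).

Lemma transfer (eps eps' delta delta2 : R) E :
  0 < delta2 -> delta2 <= delta ->
  delta2 + ((Lu uy * #|X1|)%N)%:R * eps' <= eps ->
  valid pi1 eps' delta E -> valid pi2 eps delta2 (E2 vx uy E).
Proof.
move=> d20 d2d Heps [/andP[d0 d1] uE kerE main].
split.
- by rewrite d20 (le_trans d2d d1).
- exact: undup_uniq.
- move=> r; rewrite mem_undup mem_cat => /orP[/mapP[r' r'E ->]|/mapP[y _ ->]].
    by rewrite (pi2_psi Hpi1 Hpi2 Hvx) kerE.
  exact: (pi2_trel Hpi1 Hpi2 Hvx Huy).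
move=> Om rho2 Hrho2 Hsm.
pose rho1 := fun u : FG X1 => @evalw X1 (permgrp Om) (fun x => rho2 (vx x)) (sval u).
have Hrho1 : FG_perm_hom rho1.
  by move=> u v; rewrite /rho1 /= evalw_fred evalw_cat.
have Hr12 : forall r, rho1 r = rho2 (psi vx r).
  by move=> r; rewrite (hom_psi vx (H := permgrp Om) Hrho2).
have Hsm1 : forall r, r \in E -> dOm R (rho1 r) 1%g < delta.
  move=> r rE; rewrite Hr12; apply: lt_le_trans d2d; apply: Hsm.
  by rewrite mem_undup mem_cat map_f.
have [phi [Hphi Hclose]] := main Om rho1 Hrho1 Hsm1.
exists phi; split => // y.
have Hpp : @FG_hom X1 (permgrp Om) (fun u => phi (pi1 u)).
  by move=> u v; rewrite Hpi1 Hphi.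
have Ht : dOm R (rho2 (trel vx uy y)) 1%g < delta2.
  by apply: Hsm; rewrite mem_undup mem_cat; apply/orP; right; rewrite map_f ?mem_enum.
rewrite (hom_trel vx uy (H := permgrp Om) Hrho2) /= -Hr12 in Ht.
rewrite -Huy (hom_eval (H := permgrp Om) Hpp).
have Hg1 : forall x, rho1 (gen x) = rho2 (vx x) by move=> x; rewrite /rho1 /= mulg1.
set g2 := (fun x => phi (pi1 (gen x))).
set A := rho1 (uy y).
set B := @evalw X1 (permgrp Om) g2 (sval (uy y)).
have c0 : 0 <= (#|Om|%:R : R)^-1 by rewrite invr_ge0.
have H1 := cnt_tri (rho2 (gen y)) A B.
have H2 := cnt_eval (fun x => rho2 (vx x)) g2 (sval (uy y)).
rewrite dOm_cnt cnt_Vmul in Ht.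
have Hsum : (\sum_x (cnt (rho2 (vx x)) (g2 x))%:R) / (#|Om|%:R : R) <= #|X1|%:R * eps'.
  rewrite mulr_suml; apply: (le_trans (y := \sum_(x : X1) eps')).
    apply: ler_sum => x _; apply/ltW; have := Hclose x; by rewrite /g2 -Hg1.
  by rewrite sumr_const mulr_natl cardE.
have Hsz : (size (sval (uy y)))%:R <= (Lu uy)%:R :> R.
  by rewrite ler_nat; exact: (leq_bigmax (F := fun y => wlen (uy y)) y).
rewrite dOm_cnt; apply: (le_lt_trans (y := ((cnt (rho2 (gen y)) A)%:R
   + (size (sval (uy y)))%:R * (\sum_x (cnt (rho2 (vx x)) (g2 x))%:R)) / (#|Om|%:R : R))).
  apply: ler_wpM2r => //; rewrite -natr_sum -natrM -natrD ler_nat.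
  exact: leq_trans H1 (leq_add (leqnn _) H2).
rewrite mulrDl; apply: (lt_le_trans _ Heps); apply: ltr_leD => //.
rewrite -mulrA natrM -mulrA.
have S0 : 0 <= (\sum_x (cnt (rho2 (vx x)) (g2 x))%:R) / (#|Om|%:R : R).
  by apply: mulr_ge0 => //; apply: sumr_ge0.
apply: le_trans (ler_wpM2r S0 Hsz) _.
by apply: ler_wpM2l.
Qed.
End Transfer2.

End P5.
Import P5.

Module P6.
Set Implicit Arguments. Unset Strict Implicit. Unset Printing Implicit Defensive.
Import Order.TTheory GRing.Theory Num.Theory.

Lemma cancels_flip (X : finType) (a : X * bool) : cancels a (flipl a).
Proof. by rewrite /cancels /flipl /= eqxx; case: a.2. Qed.

Lemma cr_cancel (X : finType) (a : X * bool) z :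
  reducedb z -> cons_red a (cons_red (flipl a) z) = z.
Proof.
case: z => [|b z] Hz; first by rewrite /= cancels_flip.
rewrite /=; case: ifP => Hab; last by rewrite /= cancels_flip.
have Eb : b = a.
  move: Hab; rewrite /cancels /flipl /=; case: a b {Hz} => [x p] [y q] /= /andP[/eqP -> ].
  by case: p; case: q.
subst b; case: z Hz => [|c z] //= /andP[Hac _]; by rewrite (negbTE Hac).
Qed.

Lemma foldr_cancel (X : finType) (v z : seq (X * bool)) :
  reducedb z -> foldr (@cons_red X) z (v ++ invw v) = z.
Proof.
elim: v z => [|a v IH] z Hz //=.
rewrite /invw /= rev_cons -cats1 -/(invw v) catA foldr_cat /=.
by rewrite IH ?cr_cancel // cons_red_reduced.
Qed.

Lemma fred_cat (X : finType) (a b : seq (X * bool)) :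
  fred (a ++ b) = foldr (@cons_red X) (fred b) a.
Proof. by rewrite /fred foldr_cat. Qed.

Lemma fred_inv_nil (X : finType) (u v : FG X) :
  fred (invw (sval v) ++ sval u) = [::] -> u = v.
Proof.
case: u => u pu; case: v => v pv /= E; apply: FG_eq => /=.
have E1 : fred (v ++ (invw v ++ u)) = v.
  by rewrite fred_cat E -/(fred v) fred_id.
have E2 : fred (v ++ (invw v ++ u)) = u.
  by rewrite catA fred_cat foldr_cancel fred_id ?fred_id.
by rewrite -E2 E1.
Qed.

Lemma perm_ext (T : finType) (f : T -> option T) :
  (forall a b y, f a = Some y -> f b = Some y -> a = b) ->
  exists s : {perm T}, forall a y, f a = Some y -> s a = y.
Proof.
move=> finj.
pose D := [pred t | f t != None].
pose F := fun t => odflt t (f t).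
pose Rg := [pred y | y \in [set F t | t in D]].
have cardDR : #|D| = #|Rg|.
  rewrite /Rg -(card_in_imset (f := F)); first by apply: eq_card => y; rewrite !inE.
  move=> a b; rewrite !inE /F; case Ea: (f a) => [ya|] //; case Eb: (f b) => [yb|] //= _ _ E.
  by subst; apply: (finj _ _ yb).
pose cD := enum (predC D); pose cR := enum (predC Rg).
have scD : size cD = size cR.
  rewrite /cD /cR -!cardE.
  have := cardC D; have := cardC Rg; rewrite cardDR => <-; exact: addnI.
pose g := fun t => if f t is Some y then y else nth t cR (index t cD).
have gin : forall t, f t = None -> g t \in cR.
  move=> t Et; rewrite /g Et; apply: mem_nth; rewrite -scD index_mem /cD mem_enum.
  by rewrite !inE Et.
have ginj : injective g.
  move=> a b; rewrite {1 2}/g.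
  case Ea: (f a) => [ya|]; case Eb: (f b) => [yb|].
  - by move=> E; subst; apply: (finj _ _ yb).
  - move=> E; have := gin b Eb; rewrite /g Eb -E /cR mem_enum !inE /Rg.
    move/negP; case; apply/imsetP; exists a; first by rewrite !inE Ea.
    by rewrite /F Ea.
  - move=> E; have := gin a Ea; rewrite /g Ea E /cR mem_enum !inE /Rg.
    move/negP; case; apply/imsetP; exists b; first by rewrite !inE Eb.
    by rewrite /F Eb.
  - have aD : a \in cD by rewrite /cD mem_enum !inE Ea.
    have bD : b \in cD by rewrite /cD mem_enum !inE Eb.
    move=> E.
    have Ei : index a cD = index b cD.
      apply/eqP; rewrite -(nth_uniq a _ _ (enum_uniq (predC Rg))) -?scD ?index_mem //.
      rewrite -/cR E (set_nth_default a) // -scD index_mem //.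
    by rewrite -(nth_index a aD) Ei nth_index.
exists (perm ginj) => a y Ea; by rewrite permE /g Ea.
Qed.

End P6.
Import P6.

Module P7.
Set Implicit Arguments. Unset Strict Implicit. Unset Printing Implicit Defensive.
Import Order.TTheory GRing.Theory Num.Theory.

Lemma reduced_nth (X : finType) (a0 : X * bool) (s : seq (X * bool)) :
  reducedb s -> forall j, j.+1 < size s -> ~~ cancels (nth a0 s j) (nth a0 s j.+1).
Proof.
elim: s => [|a s IH] //= Hs [|j] /=.
  by case: s Hs {IH} => [|b s] //= /andP[].
move=> Hj; apply: IH => //; exact: reducedb_tail Hs.
Qed.

Section Action.
Variables (X : finType) (a0 : X * bool) (s : seq (X * bool)) (N : nat).
Hypothesis (Hs : reducedb s) (HN : size s <= N).
Local Notation k := (size s).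

Definition fx (x : X) (t : 'I_N.+1) : option 'I_N.+1 :=
  if k < t then Some t
  else if (t < k) && (nth a0 s t == (x, false)) then Some (inord t.+1)
  else if (0 < t) && (nth a0 s t.-1 == (x, true)) then Some (inord t.-1)
  else None.

Lemma fx_spec x t y : fx x t = Some y ->
  [\/ k < t /\ (y : nat) = t,
      [/\ t < k, nth a0 s t = (x, false) & (y : nat) = t.+1] |
      [/\ 0 < t, t <= k, nth a0 s t.-1 = (x, true) & (y : nat) = t.-1]].
Proof.
rewrite /fx; case: ltnP => Hk.
  by case=> <-; constructor 1.
case: ifP => [/andP[H1 /eqP H2]|_].
  case=> <-; constructor 2; split=> //; rewrite inordK //; lia.
case: ifP => [/andP[H1 /eqP H2]|_] //.
case=> <-; constructor 3; split=> //; rewrite inordK //; lia.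
Qed.

Lemma fx_inj x a b y : fx x a = Some y -> fx x b = Some y -> a = b.
Proof.
have canc : forall j, j.+1 < k -> nth a0 s j = (x, false) -> nth a0 s j.+1 = (x, true) -> False.
  move=> j Hj E1 E2; have := reduced_nth a0 Hs Hj; rewrite E1 E2 /cancels /= eqxx.
  by [].
have canc' : forall j, j.+1 < k -> nth a0 s j = (x, true) -> nth a0 s j.+1 = (x, false) -> False.
  move=> j Hj E1 E2; have := reduced_nth a0 Hs Hj; rewrite E1 E2 /cancels /= eqxx.
  by [].
move=> /fx_spec Ha /fx_spec Hb; apply: ord_inj.
case: Ha => [[A1 A2]|[A1 A2 A3]|[A1 A2 A3 A4]];
case: Hb => [[B1 B2]|[B1 B2 B3]|[B1 B2 B3 B4]]; try lia.
- exfalso; apply: (canc a); first by lia.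
    by [].
  by have -> : a.+1 = b.-1 by lia.
- exfalso; apply: (canc b); first by lia.
    by [].
  by have -> : b.+1 = a.-1 by lia.
Qed.

Variable g : X -> {perm 'I_N.+1}.
Hypothesis Hg : forall x t y, fx x t = Some y -> g x t = y.

Lemma g_fix x (t : 'I_N.+1) : k < t -> g x t = t.
Proof. by move=> Ht; apply: Hg; rewrite /fx Ht. Qed.

Lemma eval_fix w (t : 'I_N.+1) : k < t -> (@evalw X (permgrp 'I_N.+1) g w) t = t.
Proof.
move=> Ht; elim: w => [|a w IH] /=; first by rewrite perm1.
rewrite permM /letter; case: a.2.
  by rewrite -{1}(g_fix a.1 Ht) permK IH.
by rewrite g_fix.
Qed.

Lemma eval_prefix i : i <= k ->
  (@evalw X (permgrp 'I_N.+1) g (take i s)) (inord 0) = inord i.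
Proof.
elim: i => [|i IH] Hi; first by rewrite take0 /= perm1.
rewrite (take_nth a0); last by lia.
rewrite -cats1 evalw_cat /= permM IH; last by lia.
rewrite mulg1 /letter.
case Ea: (nth a0 s i) => [x []] /=.
- suff E : g x (inord i.+1) = inord i by rewrite -E permK.
  apply: Hg.
  rewrite /fx inordK; last by lia.
  have -> : (k < i.+1) = false by lia.
  case: ifP => [/andP[H1 /eqP H2]|_].
    exfalso; have := reduced_nth a0 Hs H1; by rewrite Ea H2 /cancels /= eqxx.
  by rewrite /= Ea eqxx.
- apply: Hg; rewrite /fx inordK; last by lia.
  have -> : (k < i) = false by lia.
  by rewrite Ea eqxx andbT; have -> : i < k by lia.
Qed.
End Action.

End P7.
Import P7.

Module P8.
Set Implicit Arguments. Unset Strict Implicit. Unset Printing Implicit Defensive.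
Import Order.TTheory GRing.Theory Num.Theory.

Lemma wlen_le_normE (X : finType) (E : seq (FG X)) r : r \in E -> wlen r <= normE E.
Proof.
rewrite /normE; elim: E => [|a E IH] //; rewrite in_cons big_cons => /orP[/eqP ->|/IH H].
  exact: leq_addr.
exact: leq_trans H (leq_addl _ _).
Qed.

Lemma cnt0_eq (Om : finType) (p q : {perm Om}) : cnt p q = 0 -> p = q.
Proof.
move=> /card0_eq H; apply/permP => t; have := H t; rewrite !inE /=.
by move/negbT; rewrite negbK => /eqP.
Qed.

Lemma card_small (N k : nat) (A : {pred 'I_N.+1}) :
  (forall t, t \in A -> (t : nat) <= k) -> #|A| <= k.+1.
Proof.
move=> HA; rewrite -(card_in_imset (f := fun t : 'I_N.+1 => (inord t : 'I_k.+1))).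
  by apply: leq_trans (max_card _) _; rewrite card_ord.
move=> a b Ha Hb E; apply: ord_inj; have := congr1 val E; rewrite /= !inordK // ltnS; exact: HA.
Qed.

Local Open Scope ring_scope.

Lemma lower_bound (R : realType) (G : grp) (X : finType) (pi : FG X -> G)
  (Hpi : FG_hom pi) (u v : FG X) (Huv : u <> v) (Hp : pi u = pi v)
  (eps delta : R) E (N : nat) :
  valid pi eps delta E ->
  (size (fred (invw (sval v) ++ sval u)) <= N)%N -> (N.+1)%:R * eps <= 1 ->
  (0 < normE E)%N /\ delta * (N.+1)%:R <= (size (fred (invw (sval v) ++ sval u))).+1%:R.
Proof.
set s := fred _; move=> [/andP[d0 d1] uE kerE main] HN Heps.
have Hs : reducedb s := fred_reduced _.
have k1 : (0 < size s)%N.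
  rewrite lt0n size_eq0; apply/eqP => E0; apply: Huv; exact: fred_inv_nil.
have [a0 _] : exists a0 : X * bool, True.
  by move: k1; case: (s) => [|a s'] //; exists a.
have : forall x, exists p : {perm 'I_N.+1}, forall t y, fx a0 s x t = Some y -> p t = y.
  move=> x; apply: perm_ext => a b y; exact: (@fx_inj X a0 s N Hs HN x a b y).
case/choice => g Hg.
pose rho := fun w : FG X => @evalw X (permgrp 'I_N.+1) g (sval w).
have Hrho : FG_perm_hom rho by move=> w1 w2; rewrite /rho /= evalw_fred evalw_cat.
have Hsep : forall phi : G -> {perm 'I_N.+1}, grp_perm_hom phi ->
    ~ (forall x, rho (gen x) = phi (pi (gen x))).
  move=> phi Hphi Hall.
  have Hpp : @FG_hom X (permgrp 'I_N.+1) (fun w => phi (pi w)).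
    by move=> w1 w2; rewrite Hpi Hphi.
  have Er : forall w, rho w = phi (pi w).
    move=> w; rewrite (hom_eval Hpp) (hom_eval (H := permgrp 'I_N.+1) Hrho).
    by apply: eq_evalw => x; exact: Hall.
  have Euv : rho u = rho v by rewrite !Er Hp.
  have E1 : @evalw X (permgrp 'I_N.+1) g s = 1%g.
    rewrite /s evalw_fred evalw_cat evalw_invw.
    by have := Euv; rewrite /rho /= => ->; rewrite mulVg.
  have := eval_prefix Hs HN Hg (leqnn (size s)); rewrite take_size E1 perm1.
  move/(congr1 val); rewrite /= !inordK //; try lia.
have Hno : ~ (forall r, r \in E -> dOm R (rho r) 1%g < delta).
  move=> Hall; have [phi [Hphi Hclose]] := main _ rho Hrho Hall.
  apply: (Hsep phi Hphi) => x; apply: cnt0_eq.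
  have := Hclose x; rewrite dOm_cnt card_ord => H.
  have N0 : (0 : R) < (N.+1)%:R by rewrite ltr0n.
  have : ((cnt (rho (gen x)) (phi (pi (gen x))))%:R : R) < 1.
    rewrite ltr_pdivrMr // in H; apply: lt_le_trans H _; by rewrite mulrC.
  by rewrite ltrn1; case: (cnt _ _).
split.
  rewrite lt0n; apply/negP => /eqP H0; apply: Hno => r rE.
  have : (wlen r <= 0)%N by rewrite -H0; exact: wlen_le_normE.
  rewrite leqn0 /wlen size_eq0 => /eqP Er.
  have -> : rho r = 1%g by rewrite /rho Er.
  by rewrite dOm_cnt cnt_refl mul0r.
rewrite leNgt; apply/negP => Hlt; apply: Hno => r rE.
have N0 : (0 : R) < (N.+1)%:R by rewrite ltr0n.
rewrite dOm_cnt card_ord ltr_pdivrMr //; apply: le_lt_trans Hlt; rewrite ler_nat.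
apply: card_small => t; rewrite inE /=; apply: contraR; rewrite -ltnNge => Ht.
by rewrite perm1 (eval_fix Hg).
Qed.

End P8.
Import P8.

Module P9.
Set Implicit Arguments. Unset Strict Implicit. Unset Printing Implicit Defensive.
Import Order.TTheory GRing.Theory Num.Theory.
Local Open Scope ring_scope.

Lemma Fstab_le (R : realType) (X : finType) (G : grp) (pi : FG X -> G) (x delta : R) E :
  valid pi x^-1 delta E -> Fstab pi x <= (normE E)%:R / delta.
Proof.
move=> Hv; apply: ge_inf; last by exists delta, E.
exists 0 => t [d [E' [[/andP[d0 _] _ _ _] ->]]].
by apply: divr_ge0 => //; apply: ltW.
Qed.

Lemma bij_valid (R : realType) (X : finType) (G : grp) (pi : FG X -> G) (eps : R) :
  FG_hom pi -> bijective pi -> 0 < eps -> valid pi eps 1 [::].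
Proof.
move=> Hpi [h Hh1 Hh2] e0; split => //; first by rewrite ltr01 lexx.
move=> Om rho Hrho _; exists (fun g => rho (h g)); split.
  move=> a b; rewrite -Hrho; congr rho.
  by rewrite -{1}(Hh2 a) -{1}(Hh2 b) -Hpi Hh1.
by move=> x; rewrite Hh1 dOm_cnt cnt_refl mul0r.
Qed.

End P9.
Import P9.

Unset Implicit Arguments. Set Strict Implicit. Set Printing Implicit Defensive.
Local Open Scope ring_scope.

Lemma helper1 (R : realType) (a c e : R) : 0 < c -> a <= c -> 0 <= e ->
  a * (e / (2 * c)) <= e / 2.
Proof.
move=> c0 ac e0.
have -> : a * (e / (2 * c)) = (a / c) * (e / 2).
  by field; rewrite gt_eqF.
apply: ler_piMl; first lra.
by rewrite ler_pdivrMr // mul1r.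
Qed.

Theorem proposition2p5 (R : realType) (G : grp) (X1 X2 : finType)
    (pi1 : FG X1 -> G) (pi2 : FG X2 -> G) :
  FG_epi pi1 -> FG_epi pi2 -> stable R pi1 ->
  stable R pi2 /\
  exists C0 : R, 1 <= C0 /\
    forall x : R, 1 <= x ->
      (bijective pi1 -> Fstab pi2 x <= C0 * x) /\
      (~ bijective pi1 -> Fstab pi2 x <= C0 * Fstab pi1 (C0 * x)).
Proof.
move=> [Hpi1 epi1] [Hpi2 epi2] Hst.
pose vx := fun x => proj1_sig (cid (epi2 (pi1 (gen x)))).
have Hvx : forall x, pi2 (vx x) = pi1 (gen x) by move=> x; rewrite /vx; case: cid.
pose uy := fun y => proj1_sig (cid (epi1 (pi2 (gen y)))).
have Huy : forall y, pi1 (uy y) = pi2 (gen y) by move=> y; rewrite /uy; case: cid.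
clearbody vx uy.
have Htr := transfer (R := R) Hpi1 Hpi2 Hvx Huy.
set L := (Lu uy * #|X1|)%N in Htr.
set M := Mv vx. set K := Kc vx uy.
have HnE := normE_E2 vx uy.
rewrite -/M -/K in HnE.
split.
  move=> eps e0.
  pose eps' := eps / (2 * (L.+1)%:R).
  have e'0 : 0 < eps' by rewrite divr_gt0 // mulr_gt0 // ltr0n.
  have [delta [E Hv]] := Hst eps' e'0.
  have [/andP[d0 _] _ _ _] := Hv.
  pose d2 := if delta <= eps / 2 then delta else eps / 2.
  have d2le : d2 <= eps / 2 by rewrite /d2; case: ifP => // /negbT; rewrite -ltNge => /ltW.
  exists d2, (E2 vx uy E); apply: (Htr eps eps' delta d2 E) => //.
  - by rewrite /d2; case: ifP => // _; rewrite divr_gt0.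
  - by rewrite /d2; case: ifP => // /negbT; rewrite -ltNge => /ltW.
  - have H : L%:R * (eps / (2 * L.+1%:R)) <= eps / 2.
      by apply: helper1; [rewrite ltr0n | rewrite ler_nat | exact: ltW].
    rewrite /eps'; apply: le_trans (lerD d2le H) _; lra.
case: (pselect (bijective pi1)) => Hbij.
  exists (2 * K.+1)%:R; split; first by rewrite ler1n muln_gt0.
  move=> x x1; split => [_|//].
  have x0 : 0 < x by lra.
  pose eps' := (2 * L.+1%:R * x)^-1.
  have e'0 : 0 < eps' by rewrite invr_gt0 !mulr_gt0 // ltr0n.
  have Hv := bij_valid Hpi1 Hbij e'0.
  pose d2 := (2 * x)^-1.
  have d20 : 0 < d2 by rewrite invr_gt0; lra.
  have Hv2 : valid pi2 x^-1 d2 (E2 vx uy [::]).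
    apply: (Htr _ eps' 1) => //.
    - rewrite /d2 invf_le1; lra.
    - have H : L%:R * (x^-1 / (2 * L.+1%:R)) <= x^-1 / 2.
        by apply: helper1; [rewrite ltr0n | rewrite ler_nat | rewrite invr_ge0; lra].
      have -> : eps' = x^-1 / (2 * L.+1%:R).
        by rewrite /eps'; field; rewrite (gt_eqF x0) andbT -(natrD R 1 L) pnatr_eq0.
      have -> : d2 = x^-1 / 2 by rewrite /d2; field; lra.
      rewrite addrC; apply: le_trans (lerD H (lexx _)) _; lra.
  apply: le_trans (Fstab_le Hv2) _.
  have HK : ((normE (E2 vx uy [::]))%:R : R) <= K%:R.
    by rewrite ler_nat; have := HnE [::]; rewrite /normE big_nil muln0.
  rewrite /d2 invrK natrM -natr1.
  have HK0 : (0 : R) <= K%:R by [].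
  nra.
have [u [v [Huv Hp]]] : exists u v, u <> v /\ pi1 u = pi1 v.
  apply: contrapT => Hn; apply: Hbij.
  pose h := fun g => proj1_sig (cid (epi1 g)).
  have Hh : forall g, pi1 (h g) = g by move=> g; rewrite /h; case: cid.
  exists h; last exact: Hh.
  move=> w; apply: contrapT => Hne; apply: Hn; exists (h (pi1 w)), w; split => //.
set k := size (fred (invw (sval v) ++ sval u)).
pose C0n := (2 * L.+1 + k.+2 + 2 * k.+1 * (M + K))%N.
exists C0n%:R; split; first by rewrite ler1n /C0n addn_gt0.
move=> x x1; split => // _.
have x0 : 0 < x by lra.
have CL : ((2 * L.+1)%:R : R) <= C0n%:R by rewrite ler_nat /C0n; lia.
have Ck : ((k.+2)%:R : R) <= C0n%:R by rewrite ler_nat /C0n; lia.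
have CMK : ((2 * k.+1 * (M + K))%:R : R) <= C0n%:R by rewrite ler_nat /C0n; lia.
set C := (C0n%:R : R) in CL Ck CMK *.
have C2 : (2 : R) <= C.
  apply: le_trans Ck; rewrite -[2]/((2%N)%:R) ler_nat; by [].
have Cpos : 0 < C by lra.
have Cx0 : 0 < C * x by rewrite mulr_gt0.
rewrite -ler_pdivrMl //.
apply: lb_le_inf.
  have [delta [E Hv]] := Hst (C * x)^-1 (ltac:(by rewrite invr_gt0)).
  by exists ((normE E)%:R / delta), delta, E.
move=> t [delta [E [Hv ->]]].
rewrite ler_pdivrMl //.
have [/andP[d0 d1] _ _ _] := Hv.
set T := Num.trunc (C * x).
have HT1 : C * x < T.+1%:R by rewrite -truncn_le_nat.
have HT2 : T%:R <= C * x by rewrite truncn_le; lra.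
have CCx : C <= C * x by apply: ler_peMr => //; lra.
have HkT : (k < T)%N.
  have : ((k.+2)%:R : R) < T.+1%:R by apply: le_lt_trans HT1; apply: le_trans CCx.
  by rewrite ltr_nat ltnS => /ltnW.
have T0 : (0 < T)%N := leq_ltn_trans (leq0n k) HkT.
have HkN : (k <= T.-1)%N by move: HkT; case: (T) => [|t0].
have HTC : (T.-1).+1%:R * (C * x)^-1 <= 1.
  rewrite prednK // -[X in X <= _]/(T%:R / (C * x)) ler_pdivrMr // mul1r //.
have [nE1 Hdel] := lower_bound Hpi1 Huv Hp Hv HkN HTC.
rewrite prednK // in Hdel.
have xT : x < T%:R.
  have : (C - 1) * 1 <= (C - 1) * x by apply: ler_wpM2l; lra.
  rewrite mulr1 mulrBl mul1r => H; lra.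
have xdel : x * delta <= k.+1%:R.
  apply: le_trans Hdel; rewrite mulrC; apply: ler_wpM2l; [exact: ltW | exact: ltW].
pose d2 := if delta <= (2 * x)^-1 then delta else (2 * x)^-1.
have d20 : 0 < d2 by rewrite /d2; case: ifP => // _; rewrite invr_gt0; lra.
have d2d : d2 <= delta by rewrite /d2; case: ifP => // /negbT; rewrite -ltNge => /ltW.
have d2le : d2 <= (2 * x)^-1 by rewrite /d2; case: ifP => // /negbT; rewrite -ltNge => /ltW.
have Hv2 : valid pi2 x^-1 d2 (E2 vx uy E).
  apply: (Htr _ (C * x)^-1 delta) => //.
  have H : L%:R * (x^-1 / (2 * (C / 2))) <= x^-1 / 2.
    apply: helper1; [lra | | rewrite invr_ge0; lra].
    move: CL; rewrite natrM -(natr1 (R := R) L) => CL'; lra.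
  have -> : (C * x)^-1 = x^-1 / (2 * (C / 2)).
    by field; apply/andP; split; rewrite gt_eqF.
  apply: le_trans (lerD d2le H) _; rewrite invfM; lra.
apply: le_trans (Fstab_le Hv2) _.
set N2 := normE (E2 vx uy E); set nE := normE E.
have HN : (N2%:R : R) <= (M + K)%:R * nE%:R.
  rewrite -natrM ler_nat; apply: leq_trans (HnE E) _; rewrite mulnDl leq_add2l.
  by rewrite -{1}(muln1 K) leq_mul2l nE1 orbT.
have nE0 : (0 : R) <= nE%:R by [].
have MK0 : (0 : R) <= (M + K)%:R by [].
rewrite /d2; case: ifP => Hd.
  rewrite mulrA; apply: ler_wpM2r; first by rewrite invr_ge0; exact: ltW.
  apply: le_trans HN _; apply: ler_wpM2r => //; apply: le_trans CMK.
  by rewrite ler_nat; apply: leq_pmull.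
rewrite invrK [C * _]mulrA ler_pdivlMr //.
have E1 : N2%:R * (2 * x) * delta = 2 * N2%:R * (x * delta) by ring.
rewrite E1.
apply: (le_trans (y := 2 * ((M + K)%:R * nE%:R) * k.+1%:R)).
  apply: ler_pM => //; [rewrite mulr_ge0 // | rewrite mulr_ge0 //; lra | by apply: ler_wpM2l].
have E3 : 2 * ((M + K)%:R * nE%:R) * k.+1%:R = (2 * k.+1 * (M + K))%:R * nE%:R :> R.
  by rewrite !natrM; ring.
by rewrite E3; apply: ler_wpM2r.
Qed.
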